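(* For each $n\in\omega$ the set $N_n:=\{x\in 3^\omega: x(i)\neq 2 \text{ for all } i\geq n\}$ is $\mathbb{T}$-nowhere dense, but $\bigcup_{n\in\omega}N_n$ is not $\mathbb{T}$-nowhere dense.
   Context: $\mathbb{T}$ is the tree-forcing (ordered by inclusion) consisting of perfect trees $p\subseteq 3^{<\omega}$ together with a set $A_p\subseteq\omega$ (the splitting levels of $p$) such that: for every $t\in p$, $|t|\in A_p$ iff $t$ is a splitting node of $p$; every splitting node $t$ is fully splitting (i.e. $t^\frown i\in p$ for every $i\in 3$); for every $s\supseteq \mathrm{stem}(p)$ which is not splitting, $s^\frown 2\notin p$; and for all non-splitting $s,t\in p$ with $|s|=|t|$ and all $i\in 2$, $s^\frown i\in p\Leftrightarrow t^\frown i\in p$. Here $s^\frown i$ denotes $s$ extended by the value $i$. A set $X$ is $\mathbb{T}$-nowhere dense if for every $p\in\mathbb{T}$ there is $q\leq p$ with $[q]\cap X=\emptyset$, where $[q]$ is the set of branches of $q$. *)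

(* Defs.v *)
From mathcomp Require Import all_boot.
Set Implicit Arguments. Unset Strict Implicit. Unset Printing Implicit Defensive.

(* Finite sequences in 3^{<omega} are [seq 'I_3]; reals in 3^omega are
   functions [nat -> 'I_3]. A tree is a predicate on [seq 'I_3]. *)

Definition two : 'I_3 := @Ordinal 3 2 isT.

Definition tree3 := seq 'I_3 -> Prop.

Definition is_tree (p : tree3) : Prop :=
  p [::] /\ forall t n, p t -> p (take n t).

Definition splitting (p : tree3) (t : seq 'I_3) : Prop :=
  p t /\ exists i j : 'I_3, i != j /\ p (rcons t i) /\ p (rcons t j).

Definition perfect (p : tree3) : Prop :=
  is_tree p /\ forall t, p t -> exists s, prefix t s /\ splitting p s.

Definition is_stem (p : tree3) (t : seq 'I_3) : Prop :=
  splitting p t /\ forall s, p s -> prefix t s \/ prefix s t.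

(* membership in the forcing T, witnessed by the set A of splitting levels *)
Definition T_cond_with (p : tree3) (A : nat -> Prop) : Prop :=
  [/\ perfect p,
      (forall t, p t -> (A (size t) <-> splitting p t)),
      (forall t, splitting p t -> forall i : 'I_3, p (rcons t i)),
      (forall st s, is_stem p st -> prefix st s -> p s -> ~ splitting p s ->
          ~ p (rcons s two))
    & (forall s t, p s -> p t -> ~ splitting p s -> ~ splitting p t ->
          size s = size t -> forall i : 'I_3, i != two ->
          (p (rcons s i) <-> p (rcons t i)))].

Definition T_cond (p : tree3) : Prop := exists A, T_cond_with p A.

Definition T_le (q p : tree3) : Prop := forall t, q t -> p t.

Definition branch (q : tree3) (x : nat -> 'I_3) : Prop :=
  forall n, q (mkseq x n).

Definition T_nowhere_dense (X : (nat -> 'I_3) -> Prop) : Prop :=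
  forall p, T_cond p -> exists q, T_cond q /\ T_le q p /\
     forall x, branch q x -> ~ X x.

Definition N_set (n : nat) (x : nat -> 'I_3) : Prop :=
  forall i, n <= i -> x i != two.

(* Main.v *)
From Stdlib Require Import Classical IndefiniteDescription.
Require Import Defs.
From mathcomp Require Import all_boot.
Set Implicit Arguments. Unset Strict Implicit.

Section Pre.
Variable T : eqType.
Implicit Types a b c : seq T.

Lemma pre_take a b : prefix a b -> take (size a) b = a.
Proof. by rewrite prefixE => /eqP. Qed.

Lemma pre_le a b : (prefix a b \/ prefix b a) -> size a <= size b -> prefix a b.
Proof.
case=> // hba hs; have := size_prefix hba => hs2.
have e : size a = size b by apply/eqP; rewrite eqn_leq hs hs2.
have -> : a = b by rewrite -(pre_take hba) -e take_size.
exact: prefix_refl.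
Qed.

Lemma pre_eq a b c : prefix a c -> prefix b c -> size a = size b -> a = b.
Proof. by move=> /pre_take ha /pre_take hb e; rewrite -ha -hb e. Qed.

Lemma pre_comp a b c : prefix a c -> prefix b c -> prefix a b \/ prefix b a.
Proof.
move=> ha hb; have ea := pre_take ha; have eb := pre_take hb.
case: (leqP (size a) (size b)) => h.
  left; rewrite prefixE; apply/eqP.
  by rewrite -{1}eb take_takel // ea.
right; rewrite prefixE; apply/eqP.
by rewrite -{1}ea take_takel ?eb // ltnW.
Qed.

Lemma pre_nth a b k x0 : prefix a b -> k < size a -> nth x0 a k = nth x0 b k.
Proof. by move=> /pre_take h hk; rewrite -{1}h nth_take. Qed.

Lemma pre_eqsize a b : prefix a b -> size a = size b -> a = b.
Proof. by move=> /pre_take h e; rewrite -h e take_size. Qed.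
End Pre.

Lemma deep_split p : perfect p -> forall n, exists t, splitting p t /\ n <= size t.
Proof.
case=> [[p0 ptake] perf]; elim=> [|n [t [[pt [i [j [ij [pi pj]]]]] hn]]].
  by have [s [_ hs]] := perf _ p0; exists s.
have [s [hs ss]] := perf _ pi; exists s; split => //.
by have := size_prefix hs; rewrite size_rcons; apply: leq_trans.
Qed.

Lemma stem_ex p : perfect p -> exists st, is_stem p st.
Proof.
move=> hp; have [t0 [st0 _]] := deep_split hp 0.
have : exists t, splitting p t /\ forall t', splitting p t' -> size t <= size t'.
  suff H : forall k t, splitting p t -> size t <= k -> exists t, splitting p t /\
     forall t', splitting p t' -> size t <= size t'.
    exact: (H _ t0 st0 (leqnn _)).
  elim=> [|k IH] t st hk.
    by exists t; split => // t'; rewrite leqn0 in hk; rewrite (eqP hk).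
  destruct (classic (exists t', splitting p t' /\ size t' <= k)) as [[t' [h1 h2]]|hn].
    exact: (IH t').
  exists t; split => // t' ht'; apply: leq_trans hk _; rewrite ltnNge.
  by apply/negP => h; apply: hn; exists t'.
case=> [m [sm hmin]]; exists m; split => // s ps.
case: hp => [[p0 ptake] _].
have key : forall k s, p s -> size s = k -> k <= size m -> s = take k m.
  elim=> [|k IH] s' ps' hs hk; first by rewrite take0; apply: size0nil.
  have hs' : k < size s' by rewrite hs.
  have e1 := take_nth ord0 hs'.
  have e2 : take k.+1 m = rcons (take k m) (nth ord0 m k) by apply: take_nth.
  have tk : take k s' = take k m by apply: IH; [exact: ptake | rewrite size_takel // ltnW | exact: ltnW].
  have hsfull : s' = take k.+1 s' by rewrite -hs take_size.
  have hc : nth ord0 s' k = nth ord0 m k.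
    apply/eqP; apply: contraT => hne.
    have spl : splitting p (take k m).
      split; first exact: ptake (proj1 sm).
      exists (nth ord0 s' k), (nth ord0 m k); split; first exact: hne.
      split.
        rewrite -tk -e1 -hsfull; exact: ps'.
      rewrite -e2; exact: ptake (proj1 sm).
    have := hmin _ spl; rewrite size_takel; last exact: ltnW.
    by rewrite leqNgt hk.
  rewrite hsfull e1 e2 tk hc; reflexivity.
case: (leqP (size s) (size m)) => h.
  right; rewrite (key _ _ ps erefl h); exact: prefix_take.
left; have e : take (size m) s = take (size m) m by apply: key; [exact: ptake | rewrite size_takel // ltnW |].
by rewrite take_size in e; rewrite -e prefix_take.
Qed.
Lemma part1 n p : T_cond p -> exists q, T_cond q /\ T_le q p /\
   forall x, branch q x -> ~ N_set n x.
Proof.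
case=> A [hp c2 c3 c4 c5].
have [stp hstp] := stem_ex hp.
have [t [st hn]] := deep_split hp (n + size stp).
set u := rcons t two.
have pu : p u by apply: c3.
have hstpt : prefix stp t.
  apply: pre_le; first by apply: (proj2 hstp); case: st.
  by apply: leq_trans hn; apply: leq_addl.
pose q := fun x => p x /\ (prefix x u \/ prefix u x).
have qp : forall x, q x -> p x by move=> x [].
have ext : forall x i, prefix u x -> prefix u (rcons x i).
  move=> x i h; exact: prefix_trans h (prefix_rcons _ _).
have S : forall y, splitting q y -> prefix u y.
  move=> y [qy [i [j [ij [[_ hi] [_ hj]]]]]].
  case: (leqP (size u) (size y)) => h; first by apply: pre_le => //; (case: qy => _ /or_comm).
  have hi' : prefix (rcons y i) u by apply: pre_le; [exact: hi | rewrite size_rcons].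
  have hj' : prefix (rcons y j) u by apply: pre_le; [exact: hj | rewrite size_rcons].
  have e2 : size (rcons y i) = size (rcons y j) by rewrite !size_rcons.
  have e := @rcons_injr _ y _ _ (pre_eq hi' hj' e2).
  by rewrite e eqxx in ij.
have SP : forall y, splitting q y -> splitting p y.
  by move=> y [qy [i [j [ij [hi hj]]]]]; split; [exact: qp | exists i, j; split; [|split; apply: qp]].
have PS : forall y, prefix u y -> splitting p y -> splitting q y.
  move=> y hy [py [i [j [ij [hi hj]]]]]; split; first by split; [|right].
  by exists i, j; split => //; split; split => //; right; apply: ext.
have qtree : is_tree q.
  split; first by split; [case: hp => [[]] | left; apply: prefix0s].
  move=> x k [px hx]; split; first by case: hp => [[_ pt] _]; apply: pt.
  case: hx => hx; first by left; apply: prefix_trans (prefix_take _ _) hx.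
  by apply: pre_comp (prefix_take _ _) hx.
exists q; split; last split.
- exists (fun k => A k /\ size u <= k); split.
  + split => // x [px hx].
    case: hx => hx.
      have [s [hs ss]] := (proj2 hp) _ pu.
      exists s; split; first exact: prefix_trans hx hs.
      exact: PS.
    have [s [hs ss]] := (proj2 hp) _ px.
    exists s; split => //; apply: PS => //; exact: prefix_trans hx hs.
  + move=> x qx; split.
      case=> hA hs.
      have hx : prefix u x by apply: pre_le => //; (case: qx => _ /or_comm).
      apply: PS => //; apply/c2 => //; exact: qp.
    move=> sq; split; last exact: size_prefix (S _ sq).
    by apply/c2; [exact: qp | exact: SP].
  + move=> x sq i; split; first by apply: c3; exact: SP.
    by right; apply: ext; exact: S.
  + move=> stq s [sqst _] hsts qs nss [hqs _].
    have hu : prefix u s := prefix_trans (S _ sqst) hsts.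
    have nsp : ~ splitting p s by move=> h; apply: nss; apply: PS.
    apply: (c4 stp s hstp _ (qp _ qs) nsp hqs).
    apply: prefix_trans hstpt (prefix_trans (prefix_rcons _ _) hu).
  + move=> s s' qs qs' ns ns' e i hi.
    case: (leqP (size u) (size s)) => h.
      have hu : prefix u s by apply: pre_le => //; (case: qs => _ /or_comm).
      have hu' : prefix u s' by apply: pre_le; [case: qs' => _ [] ?; [right|left] | rewrite -e].
      have nsp : ~ splitting p s by move=> h'; apply: ns; apply: PS.
      have nsp' : ~ splitting p s' by move=> h'; apply: ns'; apply: PS.
      have := c5 s s' (qp _ qs) (qp _ qs') nsp nsp' e i hi.
      by move=> [h1 h2]; split; case=> ? _; split; try right; try apply: ext; auto.
    have hu : prefix s u by apply: pre_le; [(case: qs => _) | exact: ltnW].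
    have hu' : prefix s' u by apply: pre_le; [case: qs' => _ [] ?; [left|right] | rewrite -e; exact: ltnW].
    by rewrite (pre_eq hu hu' e).
- by move=> x [].
- move=> x bx hN.
  have [_ hx] := bx (size u).
  have hm : mkseq x (size u) = u.
    have hs : size (mkseq x (size u)) = size u by rewrite size_mkseq.
    case: hx => hx; first exact: (pre_eqsize hx hs).
    by symmetry; apply: (pre_eqsize hx); rewrite hs.
  have : x (size t) = two.
    have hlt : size t < size u by rewrite size_rcons.
    by rewrite -(nth_mkseq ord0 x hlt) hm /u nth_rcons ltnn eqxx.
  apply/eqP; apply: hN; apply: leq_trans hn; exact: leq_addr.
Qed.
Definition full : tree3 := fun _ => True.

Lemma full_T : T_cond full.
Proof.
have sp : forall t, splitting full t.
  by move=> t; split => //; exists ord0, two.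
exists (fun _ => True); split.
- split; first by split.
  by move=> t _; exists t; split; [exact: prefix_refl | exact: sp].
- by move=> t _; split.
- by [].
- by move=> st s _ _ _ h; case: (h (sp s)).
- by move=> s t _ _ h; case: (h (sp s)).
Qed.

Lemma part2 q : T_cond q -> exists x n, branch q x /\ N_set n x.
Proof.
case=> A [hp c2 c3 c4 c5].
have [st hst] := stem_ex hp.
case: (hp) => [[q0 qtake] perf].
have H : forall s, exists i : 'I_3, q s -> prefix st s -> q (rcons s i) /\ i != two.
  move=> s; destruct (classic (q s /\ prefix st s)) as [[qs hs]|hn]; last first.
    by exists ord0 => a b; case: hn.
  destruct (classic (splitting q s)) as [sp|nsp].
    by exists ord0 => _ _; split; [apply: c3|].
  have [s' [hs' ss']] := perf _ qs.
  have hne : size s < size s'.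
    rewrite ltn_neqAle size_prefix // andbT; apply/negP => /eqP e.
    by apply: nsp; rewrite (pre_eqsize hs' e).
  exists (nth ord0 s' (size s)) => _ _.
  have e : rcons s (nth ord0 s' (size s)) = take (size s).+1 s'.
    by rewrite (take_nth ord0 hne) (pre_take hs').
  split; first by rewrite e; apply: qtake; case: ss'.
  apply/negP => /eqP e2; apply: (c4 st s hst hs qs nsp).
  by rewrite -e2 e; apply: qtake; case: ss'.
pose f := fun s => proj1_sig (constructive_indefinite_description _ (H s)).
have fP : forall s, q s -> prefix st s -> q (rcons s (f s)) /\ f s != two.
  by move=> s; rewrite /f; case: constructive_indefinite_description.
pose nd := fix nd k := if k is k'.+1 then rcons (nd k') (f (nd k')) else st.
have ndS : forall k, nd k.+1 = rcons (nd k) (f (nd k)) by [].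
have ndI : forall k, q (nd k) /\ prefix st (nd k).
  elim=> [|k [IH1 IH2]]; first by split; [exact: (proj1 (proj1 hst)) | exact: prefix_refl].
  rewrite ndS; split; first by case: (fP _ IH1 IH2).
  exact: prefix_trans IH2 (prefix_rcons _ _).
have ndsz : forall k, size (nd k) = size st + k.
  by elim=> [|k IH]; rewrite ?addn0 // ndS size_rcons IH addnS.
have ndP : forall a b, a <= b -> prefix (nd a) (nd b).
  move=> a b; elim: b => [|b IH]; first by rewrite leqn0 => /eqP ->; exact: prefix_refl.
  rewrite leq_eqVlt => /orP [/eqP ->|h]; first exact: prefix_refl.
  rewrite ndS; exact: prefix_trans (IH h) (prefix_rcons _ _).
pose x := fun k => nth ord0 (nd k.+1) k.
have xnd : forall k m, k < m -> x k = nth ord0 (nd m) k.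
  move=> k m h; apply: pre_nth; first exact: ndP.
  by rewrite ndsz addnS ltnS leq_addl.
exists x, (size st); split.
- move=> m.
  have -> : mkseq x m = take m (nd m).
    apply: (@eq_from_nth _ ord0).
      by rewrite size_mkseq size_takel // ndsz leq_addl.
    move=> k; rewrite size_mkseq => hk.
    by rewrite nth_mkseq // nth_take // (xnd k m hk).
  apply: qtake; exact: (proj1 (ndI m)).
- move=> i hi.
  have e : size st + (i - size st) = i by rewrite subnKC.
  have hle : (i - size st).+1 <= i.+1 by rewrite ltnS leq_subr.
  rewrite /x -(pre_nth ord0 (ndP _ _ hle)); last by rewrite ndsz addnS e.
  rewrite ndS nth_rcons ndsz e ltnn eqxx.
  exact: (proj2 (fP _ (proj1 (ndI (i - size st))) (proj2 (ndI (i - size st))))).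
Qed.

Theorem mainTheorem3 :
  (forall n : nat, T_nowhere_dense (N_set n)) /\
  ~ T_nowhere_dense (fun x => exists n : nat, N_set n x).
Proof.
split; first by move=> n p hp; exact: part1.
move=> H; have [q [hq [_ hb]]] := H _ full_T.
have [x [n [bx hn]]] := part2 hq.
by apply: (hb x bx); exists n.
Qed.
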